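(* Let $k\ge 1$ and let $(N,E)$ be a $(k+1)$-set-homogeneous $k$-hypergraph. If $U,V\subseteq N$ satisfy $|U|=|V|=k+1$ and $U$ and $V$ contain the same number of edges of $(N,E)$, then there is $g\in\mathrm{Aut}(N,E)$ with $U^g=V$.
   Context: A $k$-hypergraph is a pair $(N,E)$ with $N$ countable and $E$ a set of $k$-element subsets of $N$ (edges). A structure is $t$-set-homogeneous if whenever $U,V\subseteq N$ with $|U|=|V|=t$ carry isomorphic induced substructures, there is an automorphism $g$ with $U^g=V$. *)

(* Defs.v *)
From HB Require Import structures.
From mathcomp Require Import all_boot all_order.
From mathcomp Require Import finmap.
Set Implicit Arguments. Unset Strict Implicit. Unset Printing Implicit Defensive.
Local Open Scope fset_scope.

Definition is_hypergraph (N : countType) (k : nat) (E : pred {fset N}) : Prop :=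
  forall e : {fset N}, E e -> #|` e| = k.

Definition is_aut (N : countType) (E : pred {fset N}) (g : N -> N) : Prop :=
  bijective g /\ forall e : {fset N}, E (g @` e) = E e.

Definition induced_iso (N : countType) (E : pred {fset N}) (U V : {fset N})
    (f : N -> N) : Prop :=
  {in U &, injective f} /\ f @` U = V /\
  forall e : {fset N}, e `<=` U -> E (f @` e) = E e.

Definition set_homogeneous (N : countType) (E : pred {fset N}) (t : nat) : Prop :=
  forall U V : {fset N}, #|` U| = t -> #|` V| = t ->
    (exists f : N -> N, induced_iso E U V f) ->
    exists g : N -> N, is_aut E g /\ g @` U = V.

Definition edges_in (N : countType) (E : pred {fset N}) (U : {fset N}) : nat :=
  #|` [fset e in fpowerset U | E e]|.

(* Main.v *)
Require Import Defs.
From mathcomp Require Import all_boot all_order.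
From mathcomp Require Import finmap.
From mathcomp Require Import zify.
Local Open Scope fset_scope.

Section Helpers.
Set Implicit Arguments. Unset Strict Implicit.
Section S.
Variable K : choiceType.

Lemma nth_split (s : seq K) (P : pred K) x0 i : i < size (filter P s ++ filter (predC P) s) ->
  P (nth x0 (filter P s ++ filter (predC P) s) i) = (i < count P s).
Proof.
move=> hi; rewrite nth_cat size_filter; case: ifP => hc.
  have : nth x0 (filter P s) i \in filter P s by apply: mem_nth; rewrite size_filter.
  by rewrite mem_filter => /andP[].
have : nth x0 (filter (predC P) s) (i - count P s) \in filter (predC P) s.
  apply: mem_nth; move: hi; rewrite size_cat !size_filter; lia.
by rewrite mem_filter => /andP[/negbTE].
Qed.

Lemma card_sep (U : {fset K}) (P : pred K) : #|` [fset x in U | P x]| = count P (enum_fset U).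
Proof.
have -> : [fset x in U | P x] = [fset x in filter P (enum_fset U)].
  by apply/fsetP => x; rewrite !inE mem_filter andbC.
by rewrite card_fseq undup_id ?size_filter // filter_uniq // fset_uniq.
Qed.

Lemma bij_pred (U V : {fset K}) (P Q : pred K) : #|` U| = #|` V| ->
  count P (enum_fset U) = count Q (enum_fset V) ->
  exists f : K -> K, [/\ {in U &, injective f}, f @` U = V & {in U, forall x, Q (f x) = P x}].
Proof.
move=> hc hp.
set sU := filter P (enum_fset U) ++ filter (predC P) (enum_fset U).
set sV := filter Q (enum_fset V) ++ filter (predC Q) (enum_fset V).
have pU : perm_eq sU (enum_fset U) by rewrite perm_filterC.
have pV : perm_eq sV (enum_fset V) by rewrite perm_filterC.
have uU : uniq sU by rewrite (perm_uniq pU) fset_uniq.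
have uV : uniq sV by rewrite (perm_uniq pV) fset_uniq.
have mU : forall x, (x \in sU) = (x \in U) by move=> x; rewrite (perm_mem pU).
have mV : forall x, (x \in sV) = (x \in V) by move=> x; rewrite (perm_mem pV).
have sz : size sU = size sV by rewrite (perm_size pU) (perm_size pV).
exists (fun x => nth x sV (index x sU)); split.
- move=> x y xU yU /= e.
  have ix : index x sU < size sV by rewrite -sz index_mem mU.
  have iy : index y sU < size sV by rewrite -sz index_mem mU.
  rewrite (set_nth_default x y iy) in e.
  move/eqP: e; rewrite nth_uniq // => /eqP e.
  have hx : x \in sU by rewrite mU.
  have hy : y \in sU by rewrite mU.
  by rewrite -(nth_index x hx) e (nth_index x hy).
- apply/fsetP => y; apply/imfsetP/idP => [[x /= xU ->]|yV].
    by rewrite -mV mem_nth // -sz index_mem mU.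
  have iy : index y sV < size sU by rewrite sz index_mem mV.
  exists (nth y sU (index y sV)); first by rewrite /= -mU mem_nth.
  by rewrite index_uniq // (set_nth_default y) ?nth_index ?mV // -sz.
- move=> x xU /=.
  have ix : index x sU < size sV by rewrite -sz index_mem mU.
  rewrite nth_split // -hp -(nth_split x) ?sz //.
  by rewrite nth_index ?mU.
Qed.
End S.
Lemma compl_k (K : choiceType) (k : nat) (U e : {fset K}) : e `<=` U -> #|` U| = k.+1 -> #|` e| = k ->
  exists2 x, x \in U & e = U `\ x.
Proof.
move=> eU hU he.
have : #|` U `\` e| == 1 by rewrite cardfsDS // hU he subSnn.
case/cardfs1P => x hx.
have : x \in U `\` e by rewrite hx inE.
rewrite inE => /andP[_ xU].
exists x => //; by rewrite -hx fsetDK.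
Qed.

Lemma edges_count (N : countType) k (E : pred {fset N}) U : is_hypergraph k E -> #|` U| = k.+1 ->
  edges_in E U = count (fun x => E (U `\ x)) (enum_fset U).
Proof.
move=> hE hU; rewrite -card_sep /edges_in.
have -> : [fset e in fpowerset U | E e] = [fset U `\ x | x in [fset x in U | E (U `\ x)]].
  apply/fsetP => e; apply/idP/imfsetP => [|[x /=]].
    rewrite !inE fpowersetE => /andP[eU Ee].
    have [x xU ex] := compl_k eU hU (hE _ Ee).
    by exists x => //=; rewrite !inE xU -ex.
  rewrite !inE => /andP[xU Ex] ->.
  by rewrite fpowersetE fsubD1set Ex.
apply: card_in_imfset => x y /=; rewrite !inE => /andP[xU _] /andP[yU _] exy.
have [//|nxy] := eqVneq x y.
have xU' : x \in U by [].
have : x \in U `\ y by rewrite in_fsetD1 nxy xU'.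
by rewrite -exy in_fsetD1 eqxx.
Qed.
End Helpers.
Theorem lemma3p3 (N : countType) (k : nat) (E : pred {fset N}) :
  1 <= k ->
  is_hypergraph k E ->
  set_homogeneous E k.+1 ->
  forall U V : {fset N}, #|` U| = k.+1 -> #|` V| = k.+1 ->
    edges_in E U = edges_in E V ->
    exists g : N -> N, is_aut E g /\ g @` U = V.
Proof.
move=> _ hE hH U V hU hV he.
apply: hH => //.
rewrite (edges_count hE hU) (edges_count hE hV) in he.
have hUV : #|` U| = #|` V| by rewrite hU hV.
have [f [finj fim fQ]] := bij_pred hUV he.
exists f; split; first exact: finj; split; first exact: fim.
move=> e eU.
have finje : {in e &, injective f}.
  by move=> x y xe ye; apply: finj; apply: (fsubsetP eU).
have [hk|hk] := eqVneq #|` e| k.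
  have [x xU ->] := compl_k eU hU hk.
  have -> : f @` (U `\ x) = V `\ f x.
    apply/fsetP => y; apply/imfsetP/idP => [[z /= zin ->]|].
      move: zin; rewrite in_fsetD1 => /andP[nzx zU].
      rewrite in_fsetD1 -fim (in_imfset _ f zU) andbT.
      by apply/negP => /eqP /(finj _ _ zU xU) /eqP; rewrite (negbTE nzx).
    rewrite in_fsetD1 => /andP[nyx yV].
    move: yV; rewrite -fim => /imfsetP[z /= zU yz]; subst y.
    exists z => //; rewrite in_fsetD1 zU andbT.
    by apply/negP => /eqP ezx; move: nyx; rewrite ezx eqxx.
  exact: fQ.
have hc : #|` f @` e| = #|` e| by apply: card_in_imfset.
case Ee: (E e); first by move: (hE _ Ee) => /eqP; rewrite (negbTE hk).
case Efe: (E (f @` e)) => //.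
by move: (hE _ Efe); rewrite hc => /eqP; rewrite (negbTE hk).
Qed.
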